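(* Let $\lambda\in\mathfrak h_{\mathbb R}^*$ and $J\subseteq I$, and let $\mathbf P(\lambda,J)$ be the polyhedron $$\mathbf P(\lambda,J)=\operatorname{conv}_{\mathbb R}(W_J(\lambda))-\operatorname{cone}_{\mathbb R}(\Phi^+\setminus\Phi^+_J).$$ Let $\lambda'\in W_J(\lambda)$ be the element satisfying $\lambda'(h_{\alpha_j})\ge0$ for all $j\in J$. Then $F$ is a face of $\mathbf P(\lambda,J)$ if and only if $$w(F)=\operatorname{conv}_{\mathbb R}(W_{J\cap I_0}(\lambda'))-\operatorname{cone}_{\mathbb R}(\Phi^+_{I_0}\setminus\Phi^+_{J\cap I_0})$$ for some $w\in W_J$ and $I_0\subseteq I$.
   Context: Let $\mathfrak g$ be a complex semisimple Lie algebra with Cartan subalgebra $\mathfrak h$, roots $\Phi$, simple roots $\{\alpha_i:i\in I\}$, positive roots $\Phi^+$; $\mathfrak h_{\mathbb R}^*$ is the real span of $\Phi$, with the $W$-invariant inner product induced by the Killing form; $h_\alpha$ is the coroot of $\alpha$. For $K\subseteq I$: $\Phi^+_K=\Phi^+\cap\sum_{k\in K}\mathbb Z\alpha_k$, and $W_K$ is the subgroup of the Weyl group generated by the simple reflections $s_k$, $k\in K$; $W_K(\mu)$ is the $W_K$-orbit of $\mu$. $\operatorname{conv}_{\mathbb R}$ = convex hull; $\operatorname{cone}_{\mathbb R}(S)$ = set of finite nonnegative real combinations; $A-B=\{a-b:a\in A,b\in B\}$. A face of $\mathcal P\subseteq\mathbb R^n$ is $\mathcal P$ itself or $\mathcal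 P\cap H(v,w)$ where $H(v,w)=\{u:v\cdot(u-w)=0\}$, $\mathcal P\subseteq\{u:v\cdot(u-w)\ge0\}$ and $\mathcal P\cap H(v,w)\ne\emptyset$. *)

(* Defs.v *)
From HB Require Import structures.
From mathcomp Require Import all_boot all_order all_algebra.
Set Implicit Arguments. Unset Strict Implicit. Unset Printing Implicit Defensive.
Import Order.TTheory GRing.Theory Num.Theory.
Local Open Scope ring_scope.

Section RootSystems.
Variables (R : realFieldType) (n : nat).
Implicit Types (u v x y : 'rV[R]_n).

(* the (W-invariant) inner product on h_R^* ~ R^n *)
Definition dot u v : R := (u *m v^T) 0 0.

Definition refl (a x : 'rV[R]_n) : 'rV[R]_n :=
  x - ((2 * dot x a) / dot a a) *: a.

Definition root_system (Phi : seq 'rV[R]_n) : Prop :=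
  [/\ (0 : 'rV[R]_n) \notin Phi,
      forall a b, a \in Phi -> b \in Phi -> refl a b \in Phi,
      forall a b, a \in Phi -> b \in Phi ->
        exists z : int, (2 * dot b a) / dot a a = z%:~R
    & forall a (c : R), a \in Phi -> c *: a \in Phi -> c = 1 \/ c = -1].

(* alpha : I -> Phi is a base (the simple roots), I = 'I_n *)
Definition simple_roots (Phi : seq 'rV[R]_n) (alpha : 'I_n -> 'rV[R]_n) : Prop :=
  [/\ forall i, alpha i \in Phi,
      forall c : 'I_n -> R, \sum_i c i *: alpha i = 0 -> forall i, c i = 0
    & forall b, b \in Phi -> exists c : 'I_n -> int,
        b = \sum_i (c i)%:~R *: alpha i /\
        ((forall i, 0 <= c i) \/ (forall i, c i <= 0))].

Definition posroot (Phi : seq 'rV[R]_n) (alpha : 'I_n -> 'rV[R]_n)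
  (K : {set 'I_n}) (b : 'rV[R]_n) : Prop :=
  b \in Phi /\ exists c : 'I_n -> nat,
    b = \sum_i (c i)%:R *: alpha i /\ forall i, i \notin K -> c i = 0.

(* action of the Weyl group element s_{k1} ... s_{km} given by a word *)
Definition wact (alpha : 'I_n -> 'rV[R]_n) (s : seq 'I_n) (x : 'rV[R]_n) :=
  foldr (fun k y => refl (alpha k) y) x s.

Definition wordin (K : {set 'I_n}) (s : seq 'I_n) : bool := all (fun k => k \in K) s.

Definition Worbit (alpha : 'I_n -> 'rV[R]_n) (K : {set 'I_n}) (mu : 'rV[R]_n)
  : 'rV[R]_n -> Prop :=
  fun x => exists s, wordin K s /\ x = wact alpha s mu.

Definition conv (S : 'rV[R]_n -> Prop) : 'rV[R]_n -> Prop :=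
  fun x => exists (m : nat) (p : 'I_m -> 'rV[R]_n) (t : 'I_m -> R),
    [/\ forall i, S (p i), forall i, 0 <= t i, \sum_i t i = 1
      & x = \sum_i t i *: p i].

Definition cone (S : 'rV[R]_n -> Prop) : 'rV[R]_n -> Prop :=
  fun x => exists (m : nat) (p : 'I_m -> 'rV[R]_n) (t : 'I_m -> R),
    [/\ forall i, S (p i), forall i, 0 <= t i & x = \sum_i t i *: p i].

Definition msub (A B : 'rV[R]_n -> Prop) : 'rV[R]_n -> Prop :=
  fun x => exists a b, [/\ A a, B b & x = a - b].

Definition Ppoly (Phi : seq 'rV[R]_n) (alpha : 'I_n -> 'rV[R]_n)
  (K L : {set 'I_n}) (mu : 'rV[R]_n) : 'rV[R]_n -> Prop :=
  msub (conv (Worbit alpha K mu))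
       (cone (fun b => posroot Phi alpha L b /\ ~ posroot Phi alpha K b)).

Definition is_face (P F : 'rV[R]_n -> Prop) : Prop :=
  (forall x, F x <-> P x) \/
  exists v w : 'rV[R]_n,
    [/\ forall u, P u -> 0 <= dot v (u - w),
        forall u, F u <-> (P u /\ dot v (u - w) = 0)
      & exists u, P u /\ dot v (u - w) = 0].

End RootSystems.

(* Main.v *)
Require Import Defs.
From HB Require Import structures.
From mathcomp Require Import all_boot all_order all_algebra.
From Stdlib Require Import Classical.
Set Implicit Arguments. Unset Strict Implicit. Unset Printing Implicit Defensive.
Import Order.TTheory GRing.Theory Num.Theory.
Local Open Scope ring_scope.

Section Basic.
Variables (R : realFieldType) (n : nat).
Implicit Types (u v w x y a b : 'rV[R]_n).

Lemma dotE u v : dot u v = \sum_k u 0 k * v 0 k.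
Proof. by rewrite /dot !mxE; apply: eq_bigr => k _; rewrite mxE. Qed.

Lemma dotC u v : dot u v = dot v u.
Proof. by rewrite !dotE; apply: eq_bigr => k _; rewrite mulrC. Qed.

Lemma dotDl u w v : dot (u + w) v = dot u v + dot w v.
Proof. by rewrite !dotE -big_split; apply: eq_bigr => k _; rewrite mxE mulrDl. Qed.

Lemma dotZl (c : R) u v : dot (c *: u) v = c * dot u v.
Proof. by rewrite !dotE mulr_sumr; apply: eq_bigr => k _; rewrite mxE mulrA. Qed.

Lemma dot0l v : dot 0 v = 0.
Proof. by rewrite dotE big1 // => k _; rewrite mxE mul0r. Qed.

Lemma dotNl u v : dot (- u) v = - dot u v.
Proof. by rewrite -scaleN1r dotZl mulN1r. Qed.

Lemma dotBl u w v : dot (u - w) v = dot u v - dot w v.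
Proof. by rewrite dotDl dotNl. Qed.

Lemma dotDr u w v : dot v (u + w) = dot v u + dot v w.
Proof. by rewrite dotC dotDl !(dotC v). Qed.
Lemma dotZr (c : R) u v : dot v (c *: u) = c * dot v u.
Proof. by rewrite dotC dotZl dotC. Qed.
Lemma dot0r v : dot v 0 = 0.
Proof. by rewrite dotC dot0l. Qed.
Lemma dotNr u v : dot v (- u) = - dot v u.
Proof. by rewrite dotC dotNl dotC. Qed.
Lemma dotBr u w v : dot v (u - w) = dot v u - dot v w.
Proof. by rewrite dotDr dotNr. Qed.

Lemma dot_suml (I : Type) (r : seq I) (P : pred I) (F : I -> 'rV[R]_n) v :
  dot (\sum_(i <- r | P i) F i) v = \sum_(i <- r | P i) dot (F i) v.
Proof. exact: (big_morph (fun u => dot u v) (fun a b => dotDl a b v) (dot0l v)). Qed.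

Lemma dot_sumr (I : Type) (r : seq I) (P : pred I) (F : I -> 'rV[R]_n) v :
  dot v (\sum_(i <- r | P i) F i) = \sum_(i <- r | P i) dot v (F i).
Proof. rewrite dotC dot_suml; apply: eq_bigr => i _; exact: dotC. Qed.

Lemma dot_ge0 u : 0 <= dot u u.
Proof. by rewrite dotE; apply: sumr_ge0 => k _; rewrite -expr2 sqr_ge0. Qed.

Lemma dot_eq0 u : dot u u = 0 -> u = 0.
Proof.
rewrite dotE => H; apply/rowP => k; rewrite mxE.
have H0 : forall i : 'I_n, true -> 0 <= u 0 i * u 0 i by move=> i _; rewrite -expr2 sqr_ge0.
have := psumr_eq0P H0 H (i:=k) isT.
by move/eqP; rewrite mulf_eq0 orbb => /eqP.
Qed.


Lemma reflE a x : refl a x = x - (dot x a * (2 / dot a a)) *: a.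
Proof. by rewrite /refl mulrA (mulrC 2). Qed.

Lemma reflD a x y : refl a (x + y) = refl a x + refl a y.
Proof. by rewrite !reflE dotDl mulrDl scalerDl opprD addrACA. Qed.

Lemma reflZ a (c : R) x : refl a (c *: x) = c *: refl a x.
Proof. by rewrite !reflE dotZl scalerBr scalerA !mulrA. Qed.

Lemma reflN a x : refl a (- x) = - refl a x.
Proof. by rewrite -scaleN1r reflZ scaleN1r. Qed.

Lemma reflB a x y : refl a (x - y) = refl a x - refl a y.
Proof. by rewrite reflD reflN. Qed.

Lemma refl0 a : refl a 0 = 0.
Proof. by have := reflZ a 0 0; rewrite !scale0r. Qed.

Lemma refl_orth a x : dot x a = 0 -> refl a x = x.
Proof. by move=> h; rewrite reflE h mul0r scale0r subr0. Qed.

Lemma refl_self a : a != 0 -> refl a a = - a.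
Proof.
move=> anz; have daa : dot a a != 0.
  by apply/negP => /eqP /dot_eq0 /eqP; apply/negP.
rewrite reflE mulrCA mulfV // mulr1 scaler_nat mulr2n opprD addrA subrr add0r //.
Qed.

Lemma refl_adj a x y : dot (refl a x) y = dot x (refl a y).
Proof.
rewrite !reflE dotBl dotBr dotZl dotZr; congr (_ - _).
set k := 2 / dot a a.
by rewrite (dotC a y) mulrC mulrA mulrAC.
Qed.

Lemma refl_invol a x : a != 0 -> refl a (refl a x) = x.
Proof.
move=> anz; rewrite [refl a x]reflE reflB reflZ refl_self // reflE scalerN opprK.
by rewrite subrK.
Qed.

Lemma refl_dot a x y : a != 0 -> dot (refl a x) (refl a y) = dot x y.
Proof. by move=> anz; rewrite refl_adj refl_invol. Qed.

Lemma conv_mono (S S' : 'rV[R]_n -> Prop) x : (forall y, S y -> S' y) -> conv S x -> conv S' x.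
Proof.
move=> h [m [p [t [h1 h2 h3 h4]]]]; exists m, p, t; split => // i; exact: h.
Qed.

Lemma cone_mono (S S' : 'rV[R]_n -> Prop) x : (forall y, S y -> S' y) -> cone S x -> cone S' x.
Proof.
move=> h [m [p [t [h1 h2 h3]]]]; exists m, p, t; split => // i; exact: h.
Qed.

Lemma conv_sparse (S : 'rV[R]_n -> Prop) a0 m (p : 'I_m -> 'rV[R]_n) (t : 'I_m -> R) :
  S a0 -> (forall i, 0 <= t i) -> \sum_i t i = 1 -> (forall i, t i != 0 -> S (p i)) ->
  conv S (\sum_i t i *: p i).
Proof.
move=> ha ht hs hp.
exists m, (fun i => if t i == 0 then a0 else p i), t; split => //.
  by move=> i; case: eqP => // /eqP; exact: hp.
by apply: eq_bigr => i _; case: eqP => // ->; rewrite !scale0r.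
Qed.

Lemma cone_sparse (S : 'rV[R]_n -> Prop) m (p : 'I_m -> 'rV[R]_n) (t : 'I_m -> R) :
  (forall i, 0 <= t i) -> (forall i, t i != 0 -> S (p i)) ->
  cone S (\sum_i t i *: p i).
Proof.
move=> ht hp.
case: (classic (exists s0, S s0)) => [[s0 hs0]|hno].
  exists m, (fun i => if t i == 0 then s0 else p i), t; split => //.
    by move=> i; case: eqP => // /eqP; exact: hp.
  by apply: eq_bigr => i _; case: eqP => // ->; rewrite !scale0r.
have -> : \sum_i t i *: p i = 0.
  apply: big1 => i _; case: (eqVneq (t i) 0) => [->|/hp h]; first by rewrite scale0r.
  by exfalso; apply: hno; exists (p i).
exists 0%N, (fun _ => 0), (fun _ => 0); split; try by case.
by rewrite big_ord0.
Qed.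

End Basic.

Section Wact.
Variables (R : realFieldType) (n : nat) (alpha : 'I_n -> 'rV[R]_n).
Hypothesis anz : forall i, alpha i != 0.
Implicit Types (u v w x y a b : 'rV[R]_n) (s t : seq 'I_n).

Local Notation wact := (wact alpha).

Lemma wact_nil x : wact [::] x = x. Proof. by []. Qed.
Lemma wact_cons k s x : wact (k :: s) x = refl (alpha k) (wact s x). Proof. by []. Qed.
Lemma wact_cat s t x : wact (s ++ t) x = wact s (wact t x).
Proof. by rewrite /Defs.wact foldr_cat. Qed.
Lemma wact_rcons s k x : wact (rcons s k) x = wact s (refl (alpha k) x).
Proof. by rewrite -cats1 wact_cat. Qed.

Lemma wactD s x y : wact s (x + y) = wact s x + wact s y.
Proof. by elim: s => [|k s IH] //=; rewrite IH reflD. Qed.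
Lemma wactZ s (c : R) x : wact s (c *: x) = c *: wact s x.
Proof. by elim: s => [|k s IH] //=; rewrite IH reflZ. Qed.
Lemma wactN s x : wact s (- x) = - wact s x.
Proof. by elim: s => [|k s IH] //=; rewrite IH reflN. Qed.
Lemma wactB s x y : wact s (x - y) = wact s x - wact s y.
Proof. by rewrite wactD wactN. Qed.
Lemma wact0 s : wact s 0 = 0.
Proof. by elim: s => [|k s IH] //=; rewrite IH refl0. Qed.
Lemma wact_sum s (I : Type) (r : seq I) (P : pred I) (F : I -> 'rV[R]_n) :
  wact s (\sum_(i <- r | P i) F i) = \sum_(i <- r | P i) wact s (F i).
Proof. exact: (big_morph (wact s) (wactD s) (wact0 s)). Qed.

Lemma wact_revK s x : wact (rev s) (wact s x) = x.
Proof.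
elim: s x => [|k s IH] x //=.
by rewrite rev_cons wact_rcons refl_invol.
Qed.
Lemma wact_Krev s x : wact s (wact (rev s) x) = x.
Proof. by rewrite -{1}(revK s) wact_revK. Qed.
Lemma wact_inj s x y : wact s x = wact s y -> x = y.
Proof. by move=> h; rewrite -(wact_revK s x) h wact_revK. Qed.

Lemma wact_dot s x y : dot (wact s x) (wact s y) = dot x y.
Proof. by elim: s => [|k s IH] //=; rewrite refl_dot. Qed.
Lemma wact_adj s x y : dot (wact s x) y = dot x (wact (rev s) y).
Proof. by rewrite -{1}(wact_Krev s y) wact_dot. Qed.

Lemma wact_refl s a x : wact s (refl a x) = refl (wact s a) (wact s x).
Proof. by rewrite !reflE wactB wactZ !wact_dot. Qed.

End Wact.

Section Roots.
Variables (R : realFieldType) (n : nat) (Phi : seq 'rV[R]_n) (alpha : 'I_n -> 'rV[R]_n).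
Hypothesis hPhi : root_system Phi.
Hypothesis halpha : simple_roots Phi alpha.
Implicit Types (u v w x y a b : 'rV[R]_n) (s t : seq 'I_n) (K J L : {set 'I_n}).

Lemma alpha_Phi i : alpha i \in Phi.
Proof. by case: halpha. Qed.

Lemma zero_notin : (0 : 'rV[R]_n) \notin Phi.
Proof. by case: hPhi. Qed.

Lemma Phi_nz b : b \in Phi -> b != 0.
Proof. by move=> h; apply/eqP => e; move: zero_notin; rewrite -e h. Qed.

Lemma anz i : alpha i != 0.
Proof. exact: Phi_nz (alpha_Phi i). Qed.

Lemma refl_Phi a b : a \in Phi -> b \in Phi -> refl a b \in Phi.
Proof. by case: hPhi => _ h _ _; apply: h. Qed.

Lemma wact_Phi s b : b \in Phi -> wact alpha s b \in Phi.
Proof. by elim: s => [|k s IH] //= hb; apply: refl_Phi (alpha_Phi k) (IH hb). Qed.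

Lemma Phi_N b : b \in Phi -> - b \in Phi.
Proof. by move=> h; rewrite -refl_self ?Phi_nz // refl_Phi. Qed.

Definition Amx : 'M[R]_n := \matrix_i alpha i.

Lemma Amx_unit : Amx \in unitmx.
Proof.
rewrite -row_free_unit -kermx_eq0; apply/eqP/matrixP => i k.
set K := kermx Amx.
rewrite [RHS]mxE; have <- : row i K 0 k = K i k by rewrite mxE.
have : (row i K *m Amx = 0) by apply/sub_kermxP; exact: row_sub.
rewrite mulmx_sum_row => h.
case: halpha => _ hind _.
have e : \sum_j row i K 0 j *: alpha j = 0.
  by rewrite -[RHS]h; apply: eq_bigr => j _; rewrite /Amx rowK.
exact: (hind _ e k).
Qed.

Definition om (j : 'I_n) : 'rV[R]_n := (col j (invmx Amx))^T.
Definition coef (j : 'I_n) x : R := dot x (om j).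

Lemma coef_mx j x : coef j x = (x *m invmx Amx) 0 j.
Proof. by rewrite /coef dotE !mxE; apply: eq_bigr => k _; rewrite !mxE. Qed.

Lemma expand x : x = \sum_i coef i x *: alpha i.
Proof.
rewrite -{1}(mulmx1 x) -(mulVmx Amx_unit) mulmxA mulmx_sum_row.
by apply: eq_bigr => i _; rewrite rowK coef_mx.
Qed.

Lemma coef_alpha i j : coef j (alpha i) = (i == j)%:R.
Proof.
have := mulmxV Amx_unit; move/matrixP => /(_ i j); rewrite !mxE => <-.
by rewrite coef_mx !mxE; apply: eq_bigr => k _; rewrite !mxE.
Qed.

Lemma coefD j x y : coef j (x + y) = coef j x + coef j y. Proof. exact: dotDl. Qed.
Lemma coefZ j (c : R) x : coef j (c *: x) = c * coef j x. Proof. exact: dotZl. Qed.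
Lemma coefN j x : coef j (- x) = - coef j x. Proof. exact: dotNl. Qed.
Lemma coefB j x y : coef j (x - y) = coef j x - coef j y. Proof. exact: dotBl. Qed.
Lemma coef0 j : coef j 0 = 0. Proof. exact: dot0l. Qed.
Lemma coef_sum j (I : Type) (r : seq I) (P : pred I) (F : I -> 'rV[R]_n) :
  coef j (\sum_(i <- r | P i) F i) = \sum_(i <- r | P i) coef j (F i).
Proof. exact: dot_suml. Qed.

Lemma coef_comb (c : 'I_n -> R) j : coef j (\sum_i c i *: alpha i) = c j.
Proof.
rewrite coef_sum (bigD1 j) //= big1 ?addr0.
  by rewrite coefZ coef_alpha eqxx mulr1.
by move=> i /negbTE hi; rewrite coefZ coef_alpha hi mulr0.
Qed.

Lemma coef_eq0 x : (forall i, coef i x = 0) -> x = 0.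
Proof. by move=> h; rewrite (expand x) big1 // => i _; rewrite h scale0r. Qed.

Lemma coef_refl k i x :
  coef i (refl (alpha k) x) = coef i x - (dot x (alpha k) * (2 / dot (alpha k) (alpha k))) * (k == i)%:R.
Proof. by rewrite reflE coefB coefZ coef_alpha. Qed.

Lemma coef_refl_ne k i x : k != i -> coef i (refl (alpha k) x) = coef i x.
Proof. by move=> /negbTE h; rewrite coef_refl h mulr0 subr0. Qed.

Lemma root_sign b : b \in Phi -> (forall i, 0 <= coef i b) \/ (forall i, coef i b <= 0).
Proof.
case: halpha => _ _ h /h [c [-> [hc|hc]]]; [left|right] => i; rewrite coef_comb.
  by rewrite ler0z.
by rewrite lerz0.
Qed.

Definition posb b := (b \in Phi) && [forall i, 0 <= coef i b].

Lemma posbP b : reflect (b \in Phi /\ forall i, 0 <= coef i b) (posb b).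
Proof.
by apply: (iffP andP) => [[h /forallP]|[h1 h2]]; [|split => //; apply/forallP].
Qed.

Lemma negb_coef b : b \in Phi -> ~~ posb b -> forall i, coef i b <= 0.
Proof.
move=> hb hn; case: (root_sign hb) => // h.
by exfalso; move/negP: hn; apply; apply/posbP.
Qed.

Lemma posb_neg b : b \in Phi -> ~~ posb b -> posb (- b).
Proof.
move=> hb hn; apply/posbP; split; first exact: Phi_N.
by move=> i; rewrite coefN oppr_ge0 negb_coef.
Qed.

Lemma posb_N b : posb b -> ~~ posb (- b).
Proof.
move=> /posbP [hb h1]; apply/negP => /posbP [_ h2].
have : b = 0 by apply: coef_eq0 => i; apply/eqP; rewrite eq_le h1 andbT -oppr_ge0 -coefN h2.
by move/eqP; rewrite (negbTE (Phi_nz hb)).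
Qed.

Lemma posb_alpha k : posb (alpha k).
Proof.
apply/posbP; split; first exact: alpha_Phi.
by move=> i; rewrite coef_alpha ler0n.
Qed.

Lemma posb_refl k b : posb b -> b != alpha k -> posb (refl (alpha k) b).
Proof.
move=> hp hne; have hb : b \in Phi by case/andP: hp.
have hr : refl (alpha k) b \in Phi by apply: refl_Phi => //; exact: alpha_Phi.
apply/negPn/negP => hn.
have hz : forall i, k != i -> coef i b = 0.
  move=> i hi; apply/eqP; rewrite eq_le; move/posbP: hp => [_ ->]; rewrite andbT.
  by rewrite -(coef_refl_ne b hi) negb_coef.
have eb : b = coef k b *: alpha k.
  rewrite {1}(expand b) (bigD1 k) //= big1 ?addr0 // => i hi.
  by rewrite hz ?scale0r // eq_sym.
case: hPhi => _ _ _ /(_ (alpha k) (coef k b) (alpha_Phi k)).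
rewrite -eb => /(_ hb) [e1|e2].
  by move: hne; rewrite eb e1 scale1r eqxx.
by move/posbP: hp => [_ /(_ k)]; rewrite e2 ler0N1.
Qed.

Local Notation wact := (wact alpha).

Definition PK K b := posb b && [forall i, (i \notin K) ==> (coef i b == 0)].
Definition Cb J b := posb b && ~~ PK J b.

Lemma PKP K b : reflect (posb b /\ forall i, i \notin K -> coef i b = 0) (PK K b).
Proof.
apply: (iffP andP) => [[h /forallP h2]|[h1 h2]]; split => //.
  by move=> i hi; apply/eqP; move: (h2 i); rewrite hi.
by apply/forallP => i; apply/implyP => hi; rewrite h2.
Qed.

Lemma refl_alpha_invol k x : refl (alpha k) (refl (alpha k) x) = x.
Proof. exact: refl_invol (anz k). Qed.

Lemma PK_refl K k b : k \in K -> PK K b -> b != alpha k -> PK K (refl (alpha k) b).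
Proof.
move=> hk /PKP [hp hz] hne; apply/PKP; split; first exact: posb_refl.
move=> i hi; rewrite coef_refl_ne ?hz //; apply: contraNneq hi => <-; exact: hk.
Qed.

Lemma PK_alpha K k : k \in K -> PK K (alpha k).
Proof.
move=> hk; apply/PKP; split; first exact: posb_alpha.
move=> i hi; rewrite coef_alpha; case: eqP => // e; by move: hi; rewrite -e hk.
Qed.

Lemma refl_alpha_self k : refl (alpha k) (alpha k) = - alpha k.
Proof. exact: refl_self (anz k). Qed.

Lemma Cb_refl J j b : j \in J -> Cb J b -> Cb J (refl (alpha j) b).
Proof.
move=> hj /andP [hp hn].
have hne : b != alpha j by apply: contraNneq hn => ->; exact: PK_alpha.
apply/andP; split; first exact: posb_refl.
apply/negP => hk.
have hne2 : refl (alpha j) b != alpha j.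
  apply/negP => /eqP e.
  have : b = - alpha j by rewrite -(refl_alpha_invol j b) e refl_alpha_self.
  move=> eb; move: hp; rewrite eb => hp.
  by move: (posb_N (posb_alpha j)); rewrite hp.
by move: (PK_refl hj hk hne2); rewrite refl_alpha_invol (negbTE hn).
Qed.

Lemma Cb_wact J s b : wordin J s -> Cb J b -> Cb J (wact s b).
Proof.
elim: s => [|k s IH] //= /andP [hk hs] hb.
by apply: Cb_refl => //; apply: IH.
Qed.

Lemma coef_wact_out J s i x : wordin J s -> i \notin J -> coef i (wact s x) = coef i x.
Proof.
elim: s => [|k s IH] //= /andP [hk hs] hi.
rewrite coef_refl_ne ?IH //; apply: contraNneq hi => <-; exact: hk.
Qed.

Lemma posroot_PK K b : posroot Phi alpha K b <-> PK K b.
Proof.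
split.
  move=> [hb [c [eb hc]]]; apply/PKP; split.
    apply/posbP; split => // i; by rewrite eb coef_comb ler0n.
  by move=> i hi; rewrite eb coef_comb hc.
move=> /PKP [/posbP [hb hpos] hz]; split => //.
case: halpha => _ _ /(_ b hb) [c [eb _]].
have hc : forall i, coef i b = (c i)%:~R by move=> i; rewrite eb coef_comb.
exists (fun i => `|c i|%N); split.
  rewrite {1}eb; apply: eq_bigr => i _; congr (_ *: _).
  by rewrite natr_absz ger0_norm // -(ler0z R) -hc.
by move=> i hi; apply/eqP; rewrite -(eqr_nat R) natr_absz intr_norm -hc hz // normr0 mulr0n.
Qed.

Lemma posroot_T b : posroot Phi alpha setT b <-> posb b.
Proof.
split => [/posroot_PK /andP [] //|h]; apply/posroot_PK/PKP; split => // i.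
by rewrite in_setT.
Qed.

Lemma exchange (t : 'I_n) s : ~~ posb (wact s (alpha t)) ->
  exists s', [/\ (size s' < size s)%N, {subset s' <= s} &
                 forall x, wact s (refl (alpha t) x) = wact s' x].
Proof.
elim: s => [|k s IH].
  by rewrite wact_nil posb_alpha.
rewrite wact_cons => hn.
case hp: (posb (wact s (alpha t))).
- have e : wact s (alpha t) = alpha k.
    by apply/eqP; apply: contraNT hn => hne; exact: posb_refl.
  exists s; split => //.
    by move=> y hy; rewrite inE hy orbT.
  by move=> x; rewrite wact_cons (wact_refl anz) e refl_alpha_invol.
- have [s' [h1 h2 h3]] := IH (negbT hp).
  exists (k :: s'); split => //.
    by move=> y; rewrite !inE => /orP [->|/h2 ->] //; rewrite orbT.
  by move=> x; rewrite !wact_cons h3.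
Qed.

Lemma wact_dom J s lam : wordin J s -> (forall j, j \in J -> 0 <= dot lam (alpha j)) ->
  forall i, coef i (wact s lam) <= coef i lam.
Proof.
move=> hs hl.
have [m] := ubnP (size s); elim: m s hs => // m IH s hs hsz i.
case/lastP: s hs hsz => [|s1 t0] hs hsz; first by rewrite wact_nil.
move: hs; rewrite /wordin all_rcons => /andP [ht hs1]; set t := t0.
have hsz1 : (size s1 < m)%N by move: hsz; rewrite size_rcons.
rewrite wact_rcons.
case hp: (posb (wact s1 (alpha t))).
- rewrite reflE wactB wactZ coefB coefZ.
  apply: le_trans (IH s1 hs1 hsz1 i).
  rewrite lerBlDr lerDl; apply: mulr_ge0; last by move/posbP: hp => [_ ->].
  apply: mulr_ge0; first exact: hl.
  by apply: divr_ge0 => //; exact: dot_ge0.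
- have [s' [h1 h2 h3]] := exchange (negbT hp).
  rewrite h3; apply: IH.
    by apply/allP => y /h2; move/allP: hs1; apply.
  exact: ltn_trans h1 hsz1.
Qed.

Definition meas K v := count (fun b => PK K b && (0 < dot v b)) (undup Phi).

Lemma meas_refl K k v : k \in K -> 0 < dot v (alpha k) -> (meas K (refl (alpha k) v) < meas K v)%N.
Proof.
move=> hk hv.
set f := refl (alpha k).
set S := undup Phi.
have finj : injective f by apply: (can_inj (refl_alpha_invol k)).
have hperm : perm_eq S (map f S).
  apply: uniq_perm; first exact: undup_uniq.
    by rewrite map_inj_uniq // undup_uniq.
  move=> b; rewrite mem_undup; apply/idP/mapP.
    move=> hb; exists (f b); first by rewrite mem_undup refl_Phi // alpha_Phi.
    by rewrite /f refl_alpha_invol.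
  by move=> [c]; rewrite mem_undup => hc ->; rewrite refl_Phi // alpha_Phi.
have e1 : meas K (f v) = count (fun b => PK K (f b) && (0 < dot v b)) S.
  rewrite /meas (permP hperm) count_map; apply: eq_count => b /=.
  by rewrite /f refl_dot // anz.
rewrite e1 /meas.
have ha : alpha k \in S by rewrite mem_undup alpha_Phi.
have hN : ~~ PK K (- alpha k).
  by apply/negP => /andP [h _]; move: (posb_N (posb_alpha k)); rewrite h.
rewrite !(permP (perm_to_rem ha)) /= /f refl_alpha_self PK_alpha // hv (negbTE hN) /=.
rewrite add0n add1n ltnS; apply: sub_count => b /= /andP [h1 h2]; rewrite h2 andbT.
have hne : f b != alpha k.
  apply/eqP => e.
  have eb : b = - alpha k.
    have e' : refl (alpha k) b = alpha k := e.
    by rewrite -(refl_alpha_invol k b) e' refl_alpha_self.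
  by move: h2; rewrite eb dotNr oppr_gt0 => /(lt_trans hv); rewrite ltxx.
by move: (PK_refl hk h1 hne); rewrite refl_alpha_invol.
Qed.

Lemma descent K v : exists z, wordin K z /\ forall k, k \in K -> dot (wact z v) (alpha k) <= 0.
Proof.
have [m] := ubnP (meas K v); elim: m v => // m IH v hm.
case: (boolP [exists k, (k \in K) && (0 < dot v (alpha k))]).
- move=> /existsP [k /andP [hk hv]].
  move: hm; rewrite ltnS => hm.
  have [z [hz1 hz2]] := IH (refl (alpha k) v) (leq_trans (meas_refl hk hv) hm).
  exists (rcons z k); split; first by rewrite /wordin all_rcons hk.
  by move=> j hj; rewrite wact_rcons; apply: hz2.
- rewrite negb_exists => /forallP h; exists [::]; split => // k hk.
  by move: (h k); rewrite hk /= -leNgt.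
Qed.

Lemma dot_sq x y : dot (x + y) (x + y) = dot x x + (dot x y + dot x y) + dot y y.
Proof. by rewrite !dotDl !dotDr (dotC y x) !addrA. Qed.

Lemma dotv_coef v x : dot v x = \sum_i coef i x * dot v (alpha i).
Proof.
rewrite {1}(expand x) dot_sumr; apply: eq_bigr => i _; by rewrite dotZr.
Qed.

Lemma sum_le0_eq0 (F : 'I_n -> R) : (forall i, F i <= 0) -> \sum_i F i = 0 -> forall i, F i = 0.
Proof.
move=> hF hs i; apply/eqP; rewrite -oppr_eq0; apply/eqP.
apply: (psumr_eq0P (P := xpredT) (F := fun i => - F i)) => //.
  by move=> j _; rewrite oppr_ge0.
by rewrite sumrN hs oppr0.
Qed.

Lemma antidom_pos v b : (forall i, dot v (alpha i) <= 0) -> posb b -> dot v b <= 0.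
Proof.
move=> hv /posbP [_ hb]; rewrite dotv_coef; apply: sumr_le0 => i _.
exact: mulr_ge0_le0.
Qed.

Lemma antidom_zero v (I0 : {set 'I_n}) b : (forall i, dot v (alpha i) <= 0) ->
  (forall i, (i \in I0) = (dot v (alpha i) == 0)) -> posb b -> dot v b = 0 -> PK I0 b.
Proof.
move=> hv hI0 hb h0; apply/PKP; split => // i hi.
move/posbP: hb => [_ hb].
have := sum_le0_eq0 (F := fun i => coef i b * dot v (alpha i)) _ _ i.
rewrite -dotv_coef h0 => /(_ (fun j => mulr_ge0_le0 (hb j) (hv j)) erefl) /eqP.
by rewrite mulf_eq0 -hI0 (negbTE hi) orbF => /eqP.
Qed.

Lemma PK_zero v (I0 : {set 'I_n}) b : (forall i, (i \in I0) = (dot v (alpha i) == 0)) -> PK I0 b -> dot v b = 0.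
Proof.
move=> hI0 /PKP [_ hz]; rewrite dotv_coef; apply: big1 => i _.
case: (boolP (i \in I0)) => hi; last by rewrite hz // mul0r.
by move: hi; rewrite hI0 => /eqP ->; rewrite mulr0.
Qed.

Lemma wact_dotv v K z x : (forall k, k \in K -> dot v (alpha k) = 0) -> wordin K z ->
  dot v (wact z x) = dot v x.
Proof.
move=> hK; elim: z => [|k z IH] //= /andP [hk hz].
by rewrite -refl_adj (refl_orth (hK k hk)) IH.
Qed.

Lemma PK_I K L b : PK K b -> PK L b -> PK (K :&: L) b.
Proof.
move=> /PKP [hp h1] /PKP [_ h2]; apply/PKP; split => // i.
by rewrite inE negb_and => /orP [/h1|/h2].
Qed.

Lemma PK_sub K L b : K \subset L -> PK K b -> PK L b.
Proof.
move=> hKL /PKP [hp h1]; apply/PKP; split => // i hi; apply: h1.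
by apply: contra hi; move/subsetP: hKL; apply.
Qed.

Lemma wordin_sub K L s : K \subset L -> wordin K s -> wordin L s.
Proof. by move=> /subsetP h /allP hs; apply/allP => k /hs; apply: h. Qed.

Lemma orbit_face J (I0 : {set 'I_n}) v mu g :
  (forall j, j \in J -> 0 <= dot mu (alpha j)) ->
  (forall i, dot v (alpha i) <= 0) -> (forall i, (i \in I0) = (dot v (alpha i) == 0)) ->
  wordin J g ->
  dot v mu <= dot v (wact g mu) /\
  (dot v (wact g mu) = dot v mu -> Worbit alpha (J :&: I0) mu (wact g mu)).
Proof.
move=> hmu hv hI0 hg.
set d := mu - wact g mu.
have hd : forall i, 0 <= coef i d by move=> i; rewrite coefB subr_ge0 (wact_dom hg hmu).
have hvd : dot v d <= 0.
  by rewrite dotv_coef; apply: sumr_le0 => i _; apply: mulr_ge0_le0.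
split; first by move: hvd; rewrite /d dotBr subr_le0.
move=> heq.
set K := J :&: I0.
have [z [hz hzd]] := descent K (- wact g mu).
set mu2 := wact z (wact g mu).
have hmu2 : forall k, k \in K -> 0 <= dot mu2 (alpha k).
  by move=> k hk; move: (hzd k hk); rewrite wactN dotNl oppr_le0.
have hKJ : K \subset J := subsetIl J I0.
have hKI : forall k, k \in K -> dot v (alpha k) = 0.
  by move=> k; rewrite inE => /andP [_]; rewrite hI0 => /eqP.
have hzg : wordin J (z ++ g).
  by rewrite /wordin all_cat; apply/andP; split => //; exact: wordin_sub hz.
set d2 := mu - mu2.
have hd2 : forall i, 0 <= coef i d2.
  by move=> i; rewrite coefB subr_ge0 /mu2 -wact_cat (wact_dom hzg hmu).
have hvd2 : dot v d2 = 0 by rewrite /d2 dotBr /mu2 (wact_dotv _ hKI hz) heq subrr.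
have hd2z : forall i, coef i d2 != 0 -> i \in K.
  move=> i hi; rewrite inE; apply/andP; split.
    apply: contraR hi => hiJ.
    by rewrite coefB /mu2 -wact_cat (coef_wact_out _ hzg hiJ) subrr eqxx.
  rewrite hI0.
  have := sum_le0_eq0 (F := fun i => coef i d2 * dot v (alpha i)) _ _ i.
  rewrite -dotv_coef hvd2 => /(_ (fun j => mulr_ge0_le0 (hd2 j) (hv j)) erefl) /eqP.
  by rewrite mulf_eq0 (negbTE hi).
have hpos : 0 <= dot mu2 d2.
  rewrite (dotv_coef mu2 d2); apply: sumr_ge0 => i _.
  case: (eqVneq (coef i d2) 0) => [->|/hd2z hi]; first by rewrite mul0r.
  by apply: mulr_ge0 => //; exact: hmu2.
have hnorm : dot mu2 mu2 = dot mu mu by rewrite /mu2 -wact_cat (wact_dot anz).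
have emu : mu = mu2 + d2 by rewrite /d2 addrC subrK.
have e := dot_sq mu2 d2; rewrite -emu in e.
have h0 : (dot mu2 d2 + dot mu2 d2) + dot d2 d2 = 0.
  by apply: (addrI (dot mu mu)); rewrite addr0 {1}(esym hnorm) addrA -e.
have hd20 : d2 = 0.
  apply: dot_eq0; apply/eqP; rewrite eq_le dot_ge0 andbT.
  by move/eqP: h0; rewrite addrC addr_eq0 => /eqP ->; rewrite oppr_le0 addr_ge0.
have e2 : mu2 = mu by move/eqP: hd20; rewrite subr_eq0 => /eqP.
exists (rev z); split; first by rewrite /wordin all_rev.
by rewrite -[in RHS]e2 /mu2 (wact_revK anz).
Qed.

Lemma dot_split v mu m (p : 'I_m -> 'rV[R]_n) (t : 'I_m -> R) m' (q : 'I_m' -> 'rV[R]_n) (c : 'I_m' -> R) :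
  \sum_i t i = 1 ->
  dot v ((\sum_i t i *: p i) - \sum_k c k *: q k) - dot v mu =
  \sum_i t i * (dot v (p i) - dot v mu) + \sum_k c k * (- dot v (q k)).
Proof.
move=> ht; rewrite dotBr !dot_sumr.
rewrite -{1}[dot v mu]mul1r -ht mulr_suml.
have e1 : \sum_i t i * (dot v (p i) - dot v mu) =
          \sum_i t i * dot v (p i) - \sum_i t i * dot v mu.
  by rewrite -sumrB; apply: eq_bigr => i _; rewrite mulrBr.
have e2 : \sum_k c k * (- dot v (q k)) = - \sum_k c k * dot v (q k).
  by rewrite -sumrN; apply: eq_bigr => k _; rewrite mulrN.
rewrite e1 e2.
have e3 : \sum_i dot v (t i *: p i) = \sum_i t i * dot v (p i).
  by apply: eq_bigr => i _; rewrite dotZr.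
have e4 : \sum_k dot v (c k *: q k) = \sum_k c k * dot v (q k).
  by apply: eq_bigr => i _; rewrite dotZr.
by rewrite e3 e4 addrAC.
Qed.

Lemma face_calc J (I0 : {set 'I_n}) v mu u :
  (forall j, j \in J -> 0 <= dot mu (alpha j)) ->
  (forall i, dot v (alpha i) <= 0) -> (forall i, (i \in I0) = (dot v (alpha i) == 0)) ->
  (Ppoly Phi alpha J setT mu u -> dot v mu <= dot v u) /\
  ((Ppoly Phi alpha J setT mu u /\ dot v u = dot v mu) <-> Ppoly Phi alpha (J :&: I0) I0 mu u).
Proof.
move=> hmu hv hI0.
have hKI : forall k, k \in J :&: I0 -> dot v (alpha k) = 0.
  by move=> k; rewrite inE => /andP [_]; rewrite hI0 => /eqP.
have key : forall m (p : 'I_m -> 'rV[R]_n) (t : 'I_m -> R) m' (q : 'I_m' -> 'rV[R]_n) (c : 'I_m' -> R),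
   (forall i, Worbit alpha J mu (p i)) -> (forall i, 0 <= t i) ->
   (forall k, posroot Phi alpha setT (q k) /\ ~ posroot Phi alpha J (q k)) -> (forall k, 0 <= c k) ->
   (forall i, 0 <= t i * (dot v (p i) - dot v mu)) /\ (forall k, 0 <= c k * (- dot v (q k))).
  move=> m p t m' q c hp ht hq hc; split.
    move=> i; apply: mulr_ge0 => //; case: (hp i) => g [hg ->].
    by rewrite subr_ge0; case: (orbit_face hmu hv hI0 hg).
  move=> k; apply: mulr_ge0 => //; rewrite oppr_ge0; apply: antidom_pos => //.
  by case: (hq k) => /posroot_T.
split.
  move=> [a [b [[m [p [t [hp ht hs ea]]]] [m' [q [c [hq hc eb]]]] eu]]].
  have [h1 h2] := key _ _ _ _ _ _ hp ht hq hc.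
  rewrite -subr_ge0 eu ea eb dot_split //; apply: addr_ge0; apply: sumr_ge0 => i _.
    exact: h1.
  exact: h2.
split.
  move=> [[a [b [[m [p [t [hp ht hs ea]]]] [m' [q [c [hq hc eb]]]] eu]]] heq].
  have [h1 h2] := key _ _ _ _ _ _ hp ht hq hc.
  have hsum := dot_split v mu p q c hs.
  rewrite -ea -eb -eu heq subrr in hsum.
  have hF : \sum_i t i * (dot v (p i) - dot v mu) = 0.
    apply/eqP; move/eqP: (esym hsum); rewrite paddr_eq0; first by case/andP.
      by apply: sumr_ge0 => i _; exact: h1.
    by apply: sumr_ge0 => i _; exact: h2.
  have hG : \sum_k c k * (- dot v (q k)) = 0.
    apply/eqP; move/eqP: (esym hsum); rewrite paddr_eq0; first by case/andP.
      by apply: sumr_ge0 => i _; exact: h1.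
    by apply: sumr_ge0 => i _; exact: h2.
  have hF0 := psumr_eq0P (fun i _ => h1 i) hF.
  have hG0 := psumr_eq0P (fun i _ => h2 i) hG.
  exists a, b; split => //.
  - rewrite ea; apply: (conv_sparse (a0 := mu)) => //.
      by exists [::]; split.
    move=> i hti; case: (hp i) => g [hg egi]; rewrite egi.
    apply: (orbit_face hmu hv hI0 hg).2; rewrite -egi.
    by move/eqP: (hF0 i isT); rewrite mulf_eq0 (negbTE hti) /= subr_eq0 => /eqP.
  - rewrite eb; apply: cone_sparse => // k hck.
    have hqk : posb (q k) by case: (hq k) => /posroot_T.
    split.
      apply/posroot_PK; apply: antidom_zero => //.
      by move/eqP: (hG0 k isT); rewrite mulf_eq0 (negbTE hck) /= oppr_eq0 => /eqP.
    move/posroot_PK => h; case: (hq k) => _; apply; apply/posroot_PK.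
    exact: PK_sub (subsetIl J I0) h.
move=> [a [b [[m [p [t [hp ht hs ea]]]] [m' [q [c [hq hc eb]]]] eu]]].
split.
  exists a, b; split => //.
  - exists m, p, t; split => // i; case: (hp i) => z [hz ->]; exists z; split => //.
    exact: wordin_sub (subsetIl J I0) hz.
  - exists m', q, c; split => // k; case: (hq k) => /posroot_PK hk1 hk2; split.
      by apply/posroot_T; case/andP: hk1.
    by move/posroot_PK => hkJ; apply: hk2; apply/posroot_PK; exact: PK_I.
apply/eqP; rewrite -subr_eq0 eu ea eb dot_split //.
have -> : \sum_i t i * (dot v (p i) - dot v mu) = 0.
  apply: big1 => i _; case: (hp i) => z [hz ->].
  by rewrite (wact_dotv _ hKI hz) subrr mulr0.
have -> : \sum_k c k * (- dot v (q k)) = 0.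
  apply: big1 => k _; case: (hq k) => /posroot_PK hk _.
  by rewrite (PK_zero hI0 hk) oppr0 mulr0.
by rewrite addr0.
Qed.

Lemma Worbit_self K mu : Worbit alpha K mu mu.
Proof. by exists [::]; split. Qed.

Lemma conv_single (S : 'rV[R]_n -> Prop) mu : S mu -> conv S mu.
Proof.
move=> h; exists 1%N, (fun _ => mu), (fun _ => 1); split.
- by [].
- by move=> _; exact: ler01.
- by rewrite big_ord1.
- by rewrite big_ord1 scale1r.
Qed.

Lemma Pself K L mu : Ppoly Phi alpha K L mu mu.
Proof.
exists mu, 0; split; first exact/conv_single/Worbit_self.
  by exists 0%N, (fun _ => 0), (fun _ => 0); split; [case|case|rewrite big_ord0].
by rewrite subr0.
Qed.

Lemma Cb_posroot J b : Cb J b <-> (posroot Phi alpha setT b /\ ~ posroot Phi alpha J b).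
Proof.
split.
  by move=> /andP [h1 h2]; split; [apply/posroot_T | move/posroot_PK; apply/negP].
move=> [/posroot_T h1 h2]; apply/andP; split => //; apply/negP => /posroot_PK; exact: h2.
Qed.

Lemma Pray J mu (t : R) b : 0 <= t -> Cb J b -> Ppoly Phi alpha J setT mu (mu - t *: b).
Proof.
move=> ht hb; exists mu, (t *: b); split => //; first exact/conv_single/Worbit_self.
exists 1%N, (fun _ => b), (fun _ => t); split => //.
  by move=> _; apply/Cb_posroot.
by rewrite big_ord1.
Qed.

Lemma P_inv J mu z u : wordin J z -> Ppoly Phi alpha J setT mu u -> Ppoly Phi alpha J setT mu (wact z u).
Proof.
move=> hx [a [b [[m [p [t [hp ht hs ->]]]] [m' [q [c [hq hc ->]]]] ->]]].
exists (\sum_i t i *: wact z (p i)), (\sum_k c k *: wact z (q k)); split.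
- exists m, (fun i => wact z (p i)), t; split => // i.
  case: (hp i) => g [hg ->]; exists (z ++ g); split; last by rewrite wact_cat.
  by rewrite /wordin all_cat; apply/andP; split.
- exists m', (fun k => wact z (q k)), c; split => // k.
  by apply/Cb_posroot; apply: Cb_wact => //; apply/Cb_posroot.
- rewrite wactB !wact_sum; congr (_ - _); apply: eq_bigr => i _; by rewrite wactZ.
Qed.

Lemma P_inv_iff J mu z u : wordin J z ->
  Ppoly Phi alpha J setT mu u <-> Ppoly Phi alpha J setT mu (wact z u).
Proof.
move=> hx; split; first exact: P_inv.
move=> h; rewrite -(wact_revK anz z u); apply: P_inv => //.
by rewrite /wordin all_rev.
Qed.

Lemma face_dir J mu v w b : (forall u, Ppoly Phi alpha J setT mu u -> 0 <= dot v (u - w)) ->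
  Cb J b -> dot v b <= 0.
Proof.
move=> hvw hb; rewrite leNgt; apply/negP => hpos.
set K0 := dot v (mu - w).
set t := (`|K0| + 1) / dot v b.
have ht : 0 <= t by apply: divr_ge0; [apply: addr_ge0 | exact: ltW].
have := hvw _ (Pray mu ht hb).
rewrite addrAC dotBr dotZr -/K0 /t divfK; last by rewrite gt_eqF.
rewrite subr_ge0 => h.
have := le_trans h (ler_norm K0).
by rewrite gerDl ler10.
Qed.

Lemma worbit_swap J lam lam' s0 : wordin J s0 -> lam' = wact s0 lam ->
  forall x, Worbit alpha J lam x <-> Worbit alpha J lam' x.
Proof.
move=> hs0 e x; split.
  move=> [s [hs ->]]; exists (s ++ rev s0); split.
    by rewrite /wordin all_cat all_rev; apply/andP; split.
  by rewrite wact_cat e (wact_revK anz).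
move=> [s [hs ->]]; exists (s ++ s0); split.
  by rewrite /wordin all_cat; apply/andP; split.
by rewrite wact_cat e.
Qed.

Lemma Ppoly_swap J L lam lam' s0 : wordin J s0 -> lam' = wact s0 lam ->
  forall x, Ppoly Phi alpha J L lam x <-> Ppoly Phi alpha J L lam' x.
Proof.
move=> hs0 e x; split => [[a [b [ha hb hx]]]|[a [b [ha hb hx]]]]; exists a, b; split => //.
  by apply: conv_mono ha => y /(worbit_swap hs0 e).
by apply: conv_mono ha => y /(worbit_swap hs0 e).
Qed.

Lemma main_in (lam : 'rV[R]_n) (J : {set 'I_n}) (lam' : 'rV[R]_n)
  (hlam'1 : Worbit alpha J lam lam')
  (hlam'2 : forall j, j \in J -> 0 <= dot lam' (alpha j))
  (F : 'rV[R]_n -> Prop) :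
  is_face (Ppoly Phi alpha J setT lam) F <->
  exists (s : seq 'I_n) (I0 : {set 'I_n}),
    wordin J s /\
    (forall y, (exists x, F x /\ y = wact s x) <-> Ppoly Phi alpha (J :&: I0) I0 lam' y).
Proof.
case: hlam'1 => s0 [hs0 e0].
have hPP := Ppoly_swap setT hs0 e0.
split.
- move=> hF.
  have [v [w [hvw hFe [u0 [hu0 hu0e]]]]] : exists v w,
      [/\ forall u, Ppoly Phi alpha J setT lam u -> 0 <= dot v (u - w),
          forall u, F u <-> (Ppoly Phi alpha J setT lam u /\ dot v (u - w) = 0)
        & exists u, Ppoly Phi alpha J setT lam u /\ dot v (u - w) = 0].
    case: hF => [hall|[v [w [h1 h2 h3]]]]; last by exists v, w.
    exists 0, lam'; split.
    + by move=> u _; rewrite dot0l.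
    + by move=> u; rewrite dot0l; split => [/hall h|[/hall h _]].
    + by exists lam'; split; [apply/hPP; exact: Pself | rewrite dot0l].
  have hC : forall b, Cb J b -> dot v b <= 0.
    by move=> b; apply: (face_dir (mu := lam')) => u /hPP; exact: hvw.
  have [x [hx hxv]] := descent J v.
  set v' := wact x v.
  have hrx : wordin J (rev x) by rewrite /wordin all_rev.
  have hv' : forall i, dot v' (alpha i) <= 0.
    move=> i; case: (boolP (i \in J)) => hi; first exact: hxv.
    rewrite /v' (wact_adj anz); apply: hC; apply: Cb_wact => //.
    apply/andP; split; first exact: posb_alpha.
    apply/negP => /PKP [_ /(_ i hi)]; rewrite coef_alpha eqxx => /eqP; by rewrite oner_eq0.
  set I0 := [set i | dot v' (alpha i) == 0].
  have hI0 : forall i, (i \in I0) = (dot v' (alpha i) == 0) by move=> i; rewrite inE.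
  have FC := fun u => face_calc u hlam'2 hv' hI0.
  have hPx : forall u, Ppoly Phi alpha J setT lam u <-> Ppoly Phi alpha J setT lam' (wact x u).
    move=> u; split => h; first by apply: P_inv => //; exact/hPP.
    by apply/hPP; exact: (P_inv_iff lam' u hx).2 h.
  have hdv : forall u, dot v u = dot v' (wact x u) by move=> u; rewrite /v' (wact_dot anz).
  have hval : dot v w = dot v' lam'.
    apply/eqP; rewrite eq_le; apply/andP; split.
      set ut := wact (rev x) lam'.
      have hut : Ppoly Phi alpha J setT lam ut.
        by apply/hPx; rewrite /ut (wact_Krev anz); exact: Pself.
      by have := hvw _ hut; rewrite dotBr subr_ge0 (hdv ut) /ut (wact_Krev anz).
    have := (FC (wact x u0)).1 ((hPx u0).1 hu0).
    by rewrite -hdv; move/eqP: hu0e; rewrite dotBr subr_eq0 => /eqP <-.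
  have key : forall u, F u <-> Ppoly Phi alpha (J :&: I0) I0 lam' (wact x u).
    move=> u; split.
      move=> /hFe [hu hz]; apply/(FC _).2; split; first exact/hPx.
      by move/eqP: hz; rewrite dotBr subr_eq0 hdv hval => /eqP.
    move=> /(FC _).2 [hu hz]; apply/hFe; split; first exact/hPx.
    by apply/eqP; rewrite dotBr subr_eq0 hdv hval hz.
  exists x, I0; split => // y; split.
    by move=> [u [hu ->]]; apply/key.
  move=> hy; exists (wact (rev x) y); split; last by rewrite (wact_Krev anz).
  by apply/key; rewrite (wact_Krev anz).
- move=> [s [I0 [hs hiff]]].
  set v' := - \sum_(i | i \notin I0) om i.
  have hva : forall j, dot v' (alpha j) = - (j \notin I0)%:R.
    move=> j; rewrite /v' dotNl dot_suml; congr (- _).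
    rewrite (eq_bigr (fun i => (j == i)%:R)); last first.
      by move=> i _; rewrite dotC; exact: (coef_alpha j i).
    case: (boolP (j \in I0)) => hj /=.
      by apply: big1 => i hi; case: eqP => [e|_] //; move: hi; rewrite -e hj.
    rewrite (bigD1 j) //= eqxx big1 ?addr0 // => i /andP [_ hij].
    by rewrite eq_sym (negbTE hij).
  have hv' : forall j, dot v' (alpha j) <= 0 by move=> j; rewrite hva oppr_le0 ler0n.
  have hI0 : forall j, (j \in I0) = (dot v' (alpha j) == 0).
    by move=> j; rewrite hva oppr_eq0 pnatr_eq0 eqb0 negbK.
  have FC := fun u => face_calc u hlam'2 hv' hI0.
  have key : forall u, F u <-> Ppoly Phi alpha (J :&: I0) I0 lam' (wact s u).
    move=> u; split => [hu|hq]; first by apply/hiff; exists u.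
    by have [u' [hu' /(wact_inj anz) ->]] := (hiff _).2 hq.
  have hrs : wordin J (rev s) by rewrite /wordin all_rev.
  have hdv : forall u, dot (wact (rev s) v') (u - wact (rev s) lam') = dot v' (wact s u) - dot v' lam'.
    by move=> u; rewrite (wact_adj anz) revK wactB (wact_Krev anz) dotBr.
  right; exists (wact (rev s) v'), (wact (rev s) lam'); split.
  + move=> u hu; rewrite hdv subr_ge0; apply: (FC _).1; apply: P_inv => //; exact/hPP.
  + move=> u; rewrite hdv; split.
      move=> /key /(FC _).2 [hu hz]; split; last by rewrite hz subrr.
      by apply/hPP; exact: (P_inv_iff lam' u hs).2 hu.
    move=> [hu hz]; apply/key; apply/(FC _).2; split.
      by apply: P_inv => //; exact/hPP.
    by apply/eqP; rewrite -subr_eq0 hz.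
  + exists (wact (rev s) lam'); split; last by rewrite hdv (wact_Krev anz) subrr.
    by apply/hPP; apply: P_inv => //; exact: Pself.
Qed.

End Roots.

Theorem mainTheorem6 (R : realFieldType) (n : nat)
  (Phi : seq 'rV[R]_n) (alpha : 'I_n -> 'rV[R]_n)
  (hPhi : root_system Phi) (halpha : simple_roots Phi alpha)
  (lam : 'rV[R]_n) (J : {set 'I_n}) (lam' : 'rV[R]_n)
  (hlam'1 : Worbit alpha J lam lam')
  (hlam'2 : forall j, j \in J -> 0 <= dot lam' (alpha j))
  (F : 'rV[R]_n -> Prop) :
  is_face (Ppoly Phi alpha J setT lam) F <->
  exists (s : seq 'I_n) (I0 : {set 'I_n}),
    wordin J s /\
    (forall y, (exists x, F x /\ y = wact alpha s x) <->
               Ppoly Phi alpha (J :&: I0) I0 lam' y).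
Proof. exact: (main_in hPhi halpha hlam'1 hlam'2 F). Qed.
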